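(* Let $0\le t_1<t_2$, let $m,k>0$ be constants, let $f\in C[t_1,t_2]$, and let $u_1,v_1\in\mathbb{R}$. For $u\in C^2[t_1,t_2]$ define $$I^t[u]=\frac{m}{2}\,[u',u']_{t_1}^{t_2}+\frac{k}{2}\,[u,u]_{t_1}^{t_2}-[f,u]_{t_1}^{t_2}-m v_1\,u(t_2),$$ and let $\mathcal{D}^t=\{\phi\in C^2[t_1,t_2]:\ \phi(t_1)=u_1\}$. Suppose $u\in\mathcal{D}^t$ is a stationary point of $I^t$ on $\mathcal{D}^t$, i.e. $\frac{d}{d\varepsilon}I^t[u+\varepsilon\eta]\big|_{\varepsilon=0}=0$ for every $\eta\in C^2[t_1,t_2]$ with $\eta(t_1)=0$. Then $u$ solves the initial value problem $$m u''(s)+k u(s)=f(s),\quad s\in(t_1,t_2),\qquad u(t_1)=u_1,\quad u'(t_1)=v_1 .$$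
   Context: For an interval $[t_1,t_2]$ with $t_1\ge0$ and functions $g,h\in L^2(t_1,t_2)$, the convolution over $[t_1,t_2]$ is defined as $$[g,h]_{t_1}^{t_2}=\int_0^{t_2-t_1}g(t_1+s)\,h(t_2-s)\,ds=\int_{t_1}^{t_2}g(s)\,h(t_1+t_2-s)\,ds .$$ (In the paper the last term of $I^t$ is written as $[\tilde f^1,u]_{t_1}^{t_2}$ with $\tilde f^1(s)=m v_1\delta(s-t_1)$, which by convention evaluates to $m v_1 u(t_2)$.) *)

(* Defs.v *)
From Stdlib Require Import Reals.
From Coquelicot Require Import Coquelicot.
Open Scope R_scope.

Definition cont_on (f : R -> R) (a b : R) : Prop :=
  forall x, a <= x <= b -> forall eps, 0 < eps -> exists delta, 0 < delta /\
    forall y, a <= y <= b -> Rabs (y - x) < delta -> Rabs (f y - f x) < eps.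

Definition deriv_on (f g : R -> R) (a b : R) : Prop :=
  forall x, a <= x <= b -> forall eps, 0 < eps -> exists delta, 0 < delta /\
    forall y, a <= y <= b -> Rabs (y - x) < delta ->
      Rabs (f y - f x - g x * (y - x)) <= eps * Rabs (y - x).

Definition C2_on (phi dphi ddphi : R -> R) (a b : R) : Prop :=
  deriv_on phi dphi a b /\ deriv_on dphi ddphi a b /\ cont_on ddphi a b.

(* The convolution over [t1,t2]:  [g,h]_{t1}^{t2} = int_{t1}^{t2} g(s) h(t1+t2-s) ds *)
Definition conv (g h : R -> R) (t1 t2 : R) : R :=
  RInt (fun s => g s * h (t1 + t2 - s)) t1 t2.

Definition It (m k v1 t1 t2 : R) (f phi dphi : R -> R) : R :=
  m / 2 * conv dphi dphi t1 t2 + k / 2 * conv phi phi t1 t2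
  - conv f phi t1 t2 - m * v1 * phi t2.

(* Main.v *)
Require Import Defs.
From Stdlib Require Import Reals Lra.
From Coquelicot Require Import Coquelicot.
Open Scope R_scope.


Definition clamp (a b x : R) := Rmax a (Rmin b x).

Lemma clamp_in a b x : a <= b -> a <= clamp a b x <= b.
Proof. intros; unfold clamp, Rmax, Rmin; repeat destruct Rle_dec; lra. Qed.

Lemma clamp_id a b x : a <= x <= b -> clamp a b x = x.
Proof. intros; unfold clamp, Rmax, Rmin; repeat destruct Rle_dec; lra. Qed.

Lemma clamp_lip a b x y : a <= b -> Rabs (clamp a b y - clamp a b x) <= Rabs (y - x).
Proof.
  intros; unfold clamp, Rmax, Rmin; repeat destruct Rle_dec;
  unfold Rabs; repeat destruct Rcase_abs; lra.
Qed.

Lemma cont_ccont f a b : a <= b -> cont_on f a b ->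
  forall x, continuous (fun y => f (clamp a b y)) x.
Proof.
  intros Hab Hf x. apply continuity_pt_filterlim.
  intros eps He.
  destruct (Hf (clamp a b x) (clamp_in a b x Hab) eps He) as [d [Hd Hy]].
  exists d. split; auto. intros y [_ Hyx]. simpl in *. unfold R_dist in *.
  apply Hy. apply clamp_in; auto.
  eapply Rle_lt_trans. apply clamp_lip; auto. auto.
Qed.

Lemma derive_from_bound f x l :
  (forall eps, 0 < eps -> exists delta, 0 < delta /\ forall y, Rabs (y - x) < delta ->
     Rabs (f y - f x - l * (y - x)) <= eps * Rabs (y - x)) -> is_derive f x l.
Proof.
  intros H. apply is_derive_Reals. intros eps He.
  destruct (H (eps/2)) as [d [Hd Hb]]. lra.
  exists (mkposreal d Hd). intros h Hh0 Hh. simpl in Hh.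
  specialize (Hb (x+h)). replace (x+h-x) with h in Hb by ring.
  specialize (Hb Hh).
  replace ((f (x + h) - f x) / h - l) with ((f (x + h) - f x - l * h) / h) by (field; auto).
  unfold Rdiv. rewrite Rabs_mult, Rabs_inv by auto.
  assert (0 < Rabs h) by (apply Rabs_pos_lt; auto).
  apply Rle_lt_trans with (eps / 2 * Rabs h * / Rabs h).
  apply Rmult_le_compat_r. left; apply Rinv_0_lt_compat; auto. auto.
  field_simplify; lra.
Qed.

Lemma bound_from_derive f x l : is_derive f x l ->
  forall eps, 0 < eps -> exists delta, 0 < delta /\ forall y, Rabs (y - x) < delta ->
     Rabs (f y - f x - l * (y - x)) <= eps * Rabs (y - x).
Proof.
  intros H eps He. apply is_derive_Reals in H.
  destruct (H eps He) as [d Hd]. exists d. split. apply cond_pos.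
  intros y Hy. destruct (Req_dec y x) as [->|Hne].
  - replace (f x - f x - l * (x - x)) with 0 by ring. rewrite Rabs_R0, Rminus_diag, Rabs_R0. lra.
  - assert (Hh : y - x <> 0) by lra.
    specialize (Hd (y - x) Hh Hy). replace (x + (y - x)) with y in Hd by ring.
    replace (f y - f x - l * (y - x)) with ((y - x) * ((f y - f x) / (y - x) - l)) by (field; auto).
    rewrite Rabs_mult. rewrite Rmult_comm. apply Rmult_le_compat_r. apply Rabs_pos. lra.
Qed.

Lemma cont_from_continuous f a b : (forall x, continuous f x) -> cont_on f a b.
Proof.
  intros H x _ eps He. specialize (H x). apply continuity_pt_filterlim in H.
  destruct (H eps He) as [d [Hd Hy]]. exists d. split; auto.
  intros y _ Hyx. destruct (Req_dec y x) as [->|Hne].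
  rewrite Rminus_diag, Rabs_R0; auto.
  apply Hy; split; [split; [exact I|intro; apply Hne; auto] | simpl; unfold R_dist; auto].
Qed.

Lemma global_C2 e de dde a b :
  (forall x, is_derive e x (de x)) -> (forall x, is_derive de x (dde x)) ->
  (forall x, continuous dde x) -> C2_on e de dde a b.
Proof.
  intros H1 H2 H3. split; [|split].
  - intros x _ eps He. destruct (bound_from_derive _ _ _ (H1 x) eps He) as [d [Hd Hy]].
    exists d; split; auto.
  - intros x _ eps He. destruct (bound_from_derive _ _ _ (H2 x) eps He) as [d [Hd Hy]].
    exists d; split; auto.
  - apply cont_from_continuous; auto.
Qed.

Lemma deriv_cont F G a b : deriv_on F G a b -> cont_on F a b.
Proof.
  intros H x Hx eps He. destruct (H x Hx 1 Rlt_0_1) as [d [Hd Hy]].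
  assert (HG : 0 < Rabs (G x) + 1) by (pose proof (Rabs_pos (G x)); lra).
  exists (Rmin d (eps / (Rabs (G x) + 1))). split.
  apply Rmin_pos; auto. apply Rdiv_lt_0_compat; auto.
  intros y Hya Hyx. assert (Hyd : Rabs (y - x) < d) by (apply Rlt_le_trans with (1:=Hyx); apply Rmin_l).
  assert (Hye : Rabs (y - x) < eps / (Rabs (G x) + 1)) by (apply Rlt_le_trans with (1:=Hyx); apply Rmin_r).
  specialize (Hy y Hya Hyd).
  replace (F y - F x) with ((F y - F x - G x * (y - x)) + G x * (y - x)) by ring.
  eapply Rle_lt_trans. apply Rabs_triang. rewrite Rabs_mult.
  apply Rle_lt_trans with ((Rabs (G x) + 1) * Rabs (y - x)). nra.
  apply Rmult_lt_reg_r with (/ (Rabs (G x) + 1)). apply Rinv_0_lt_compat; auto.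
  replace ((Rabs (G x) + 1) * Rabs (y - x) * / (Rabs (G x) + 1)) with (Rabs (y - x)) by (field; lra).
  auto.
Qed.

Definition ext (F G : R -> R) (a b x : R) :=
  if Rle_dec x a then F a + G a * (x - a)
  else if Rle_dec b x then F b + G b * (x - b) else F x.

Lemma ext_eq F G a b x : a < b -> a <= x <= b -> ext F G a b x = F x.
Proof.
  intros Hab Hx. unfold ext. destruct (Rle_dec x a).
  replace x with a by lra. ring.
  destruct (Rle_dec b x). replace x with b by lra. ring. auto.
Qed.

Lemma ext_derive F G a b x : a < b -> deriv_on F G a b -> a <= x <= b ->
  is_derive (ext F G a b) x (G x).
Proof.
  intros Hab H Hx. apply derive_from_bound. intros eps He.
  destruct (H x Hx eps He) as [d [Hd Hy]].
  rewrite (ext_eq F G a b x Hab Hx).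
  destruct (Req_dec x a) as [Ea|Na].
  - exists (Rmin d (b - a)). split. apply Rmin_pos; lra.
    intros y Hyx.
    assert (H1 : Rabs (y - x) < d) by (apply Rlt_le_trans with (1:=Hyx); apply Rmin_l).
    assert (H2 : Rabs (y - x) < b - a) by (apply Rlt_le_trans with (1:=Hyx); apply Rmin_r).
    pose proof (Rabs_def2 _ _ H2).
    unfold ext. destruct (Rle_dec y a).
    + subst x. replace (F a + G a * (y - a) - F a - G a * (y - a)) with 0 by ring.
      rewrite Rabs_R0. pose proof (Rabs_pos (y - a)). nra.
    + destruct (Rle_dec b y). lra. apply Hy; auto. lra.
  - destruct (Req_dec x b) as [Eb|Nb].
    + exists (Rmin d (b - a)). split. apply Rmin_pos; lra.
      intros y Hyx.
      assert (H1 : Rabs (y - x) < d) by (apply Rlt_le_trans with (1:=Hyx); apply Rmin_l).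
      assert (H2 : Rabs (y - x) < b - a) by (apply Rlt_le_trans with (1:=Hyx); apply Rmin_r).
      pose proof (Rabs_def2 _ _ H2).
      unfold ext. destruct (Rle_dec y a). lra.
      destruct (Rle_dec b y).
      * subst x. replace (F b + G b * (y - b) - F b - G b * (y - b)) with 0 by ring.
        rewrite Rabs_R0. pose proof (Rabs_pos (y - b)). nra.
      * apply Hy; auto. lra.
    + exists (Rmin d (Rmin (x - a) (b - x))). split. apply Rmin_pos. lra. apply Rmin_pos; lra.
      intros y Hyx.
      assert (H1 : Rabs (y - x) < d) by (apply Rlt_le_trans with (1:=Hyx); apply Rmin_l).
      assert (H2 : Rabs (y - x) < Rmin (x - a) (b - x)) by (apply Rlt_le_trans with (1:=Hyx); apply Rmin_r).
      assert (H3 : Rabs (y - x) < x - a) by (apply Rlt_le_trans with (1:=H2); apply Rmin_l).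
      assert (H4 : Rabs (y - x) < b - x) by (apply Rlt_le_trans with (1:=H2); apply Rmin_r).
      pose proof (Rabs_def2 _ _ H3). pose proof (Rabs_def2 _ _ H4).
      unfold ext. destruct (Rle_dec y a). lra. destruct (Rle_dec b y). lra.
      apply Hy; auto. lra.
Qed.

Definition hb (t : R) := (Rmax 0 t) ^ 3.
Definition hb1 (t : R) := 3 * (Rmax 0 t) ^ 2.
Definition hb2 (t : R) := 6 * Rmax 0 t.

Lemma lip_cont f x K : 0 < K -> (forall y, Rabs (f y - f x) <= K * Rabs (y - x)) -> continuous f x.
Proof.
  intros HK H. apply continuity_pt_filterlim. intros eps He.
  exists (eps / K). split. apply Rdiv_lt_0_compat; auto.
  intros y [_ Hy]. simpl in *. unfold R_dist in *.
  eapply Rle_lt_trans. apply H.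
  apply Rmult_lt_reg_r with (/ K). apply Rinv_0_lt_compat; auto.
  replace (K * Rabs (y - x) * / K) with (Rabs (y - x)) by (field; lra). auto.
Qed.

Lemma rmax_lip x y : Rabs (Rmax 0 y - Rmax 0 x) <= Rabs (y - x).
Proof. unfold Rmax; repeat destruct Rle_dec; unfold Rabs; repeat destruct Rcase_abs; lra. Qed.

Lemma rmax_abs y : 0 <= Rmax 0 y <= Rabs y.
Proof. unfold Rmax; destruct Rle_dec; unfold Rabs; destruct Rcase_abs; lra. Qed.

Lemma hb2_cont x : continuous hb2 x.
Proof.
  apply (lip_cont _ _ 6). lra. intros y. unfold hb2.
  replace (6 * Rmax 0 y - 6 * Rmax 0 x) with (6 * (Rmax 0 y - Rmax 0 x)) by ring.
  rewrite Rabs_mult, Rabs_pos_eq by lra. pose proof (rmax_lip x y). lra.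
Qed.

Lemma loc_pos t : 0 < t -> locally t (fun y => 0 < y).
Proof. intros. apply (open_gt 0 t H). Qed.
Lemma loc_neg t : t < 0 -> locally t (fun y => y < 0).
Proof. intros. apply (open_lt 0 t H). Qed.

Lemma hb_derive t : is_derive hb t (hb1 t).
Proof.
  destruct (Rlt_or_le 0 t) as [Hp|Hn].
  - apply is_derive_ext_loc with (fun y => y ^ 3).
    apply (filter_imp (fun y => 0 < y)). intros y Hy. unfold hb. rewrite Rmax_right; lra.
    apply loc_pos; auto.
    unfold hb1. rewrite Rmax_right by lra. auto_derive; auto. ring.
  - destruct (Rlt_or_le t 0) as [Hn'|Hz].
    + apply is_derive_ext_loc with (fun _ => 0).
      apply (filter_imp (fun y => y < 0)). intros y Hy. unfold hb. rewrite Rmax_left; lra.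
      apply loc_neg; auto.
      unfold hb1. rewrite Rmax_left by lra. replace (3 * 0 ^ 2) with (@zero R_NormedModule).
      apply is_derive_const. simpl. unfold zero; simpl. ring.
    + replace t with 0 by lra. apply derive_from_bound. intros eps He.
      exists (Rmin 1 eps). split. apply Rmin_pos; lra. intros y Hy.
      assert (H1 : Rabs (y - 0) < 1) by (apply Rlt_le_trans with (1:=Hy); apply Rmin_l).
      assert (H2 : Rabs (y - 0) < eps) by (apply Rlt_le_trans with (1:=Hy); apply Rmin_r).
      rewrite Rminus_0_r in *. unfold hb, hb1. rewrite (Rmax_left 0 0) by lra.
      pose proof (rmax_abs y) as [A1 A2].
      replace ((Rmax 0 y) ^ 3 - 0 ^ 3 - 3 * 0 ^ 2 * y) with ((Rmax 0 y) ^ 3) by ring.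
      rewrite Rabs_pos_eq by (apply pow_le; lra).
      set (m := Rmax 0 y) in *. pose proof (Rabs_pos y).
      assert (m * m <= Rabs y * Rabs y) by (apply Rmult_le_compat; lra).
      assert (Rabs y * Rabs y <= 1 * eps) by (apply Rmult_le_compat; lra).
      assert (m * m <= eps) by lra. replace (m ^ 3) with ((m * m) * m) by ring.
      apply Rmult_le_compat; nra.
Qed.

Lemma hb1_derive t : is_derive hb1 t (hb2 t).
Proof.
  destruct (Rlt_or_le 0 t) as [Hp|Hn].
  - apply is_derive_ext_loc with (fun y => 3 * y ^ 2).
    apply (filter_imp (fun y => 0 < y)). intros y Hy. unfold hb1. rewrite Rmax_right; lra.
    apply loc_pos; auto.
    unfold hb2. rewrite Rmax_right by lra. auto_derive; auto. ring.
  - destruct (Rlt_or_le t 0) as [Hn'|Hz].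
    + apply is_derive_ext_loc with (fun _ => 0).
      apply (filter_imp (fun y => y < 0)). intros y Hy. unfold hb1. rewrite Rmax_left; lra.
      apply loc_neg; auto.
      unfold hb2. rewrite Rmax_left by lra. replace (6 * 0) with (@zero R_NormedModule).
      apply is_derive_const. simpl. unfold zero; simpl. ring.
    + replace t with 0 by lra. apply derive_from_bound. intros eps He.
      exists (eps / 3). split. lra. intros y Hy.
      rewrite Rminus_0_r in *. unfold hb1, hb2. rewrite (Rmax_left 0 0) by lra.
      pose proof (rmax_abs y) as [A1 A2].
      replace (3 * (Rmax 0 y) ^ 2 - 3 * 0 ^ 2 - 6 * 0 * y) with (3 * (Rmax 0 y) ^ 2) by ring.
      rewrite Rabs_pos_eq by (pose proof (pow_le (Rmax 0 y) 2 A1); lra).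
      set (m := Rmax 0 y) in *. pose proof (Rabs_pos y). nra.
Qed.

Lemma der_cont (f : R -> R) x l : is_derive f x l -> continuous f x.
Proof. intros H. apply (ex_derive_continuous (K:=R_AbsRing) (V:=R_NormedModule)). exists l; exact H. Qed.

Section Bump.
Variables t1 t2 a b : R.
Definition Qb r := (t1 + t2 - r - a) * (b - (t1 + t2 - r)).
Definition Qb1 r := 2 * (t1 + t2 - r) - a - b.
Definition eta r := hb (Qb r).
Definition deta r := hb1 (Qb r) * Qb1 r.
Definition ddeta r := hb2 (Qb r) * Qb1 r * Qb1 r + hb1 (Qb r) * (-2).

Lemma Qb_derive x : is_derive Qb x (Qb1 x).
Proof. unfold Qb, Qb1. auto_derive; auto. ring. Qed.
Lemma Qb1_derive x : is_derive Qb1 x (-2).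
Proof. unfold Qb1. auto_derive; auto. ring. Qed.

Lemma eta_derive x : is_derive eta x (deta x).
Proof.
  pose proof (is_derive_comp hb Qb x _ _ (hb_derive (Qb x)) (Qb_derive x)) as H.
  unfold eta, deta. replace (hb1 (Qb x) * Qb1 x) with (scal (Qb1 x) (hb1 (Qb x))). exact H.
  unfold scal; simpl; unfold mult; simpl. ring.
Qed.

Lemma hb1Q_derive x : is_derive (fun r => hb1 (Qb r)) x (Qb1 x * hb2 (Qb x)).
Proof.
  exact (is_derive_comp hb1 Qb x _ _ (hb1_derive (Qb x)) (Qb_derive x)).
Qed.

Lemma deta_derive x : is_derive deta x (ddeta x).
Proof.
  pose proof (is_derive_mult _ _ x _ _ (hb1Q_derive x) (Qb1_derive x)) as H.
  unfold deta, ddeta. replace (hb2 (Qb x) * Qb1 x * Qb1 x + hb1 (Qb x) * -2)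
    with (plus (mult (Qb1 x * hb2 (Qb x)) (Qb1 x)) (mult (hb1 (Qb x)) (-2))).
  apply H. intros; apply Rmult_comm.
  unfold plus, mult; simpl. ring.
Qed.

Lemma ddeta_cont x : continuous ddeta x.
Proof.
  assert (CQ : forall y, continuous Qb y) by (intro; eapply der_cont; apply Qb_derive).
  assert (CQ1 : forall y, continuous Qb1 y) by (intro; eapply der_cont; apply Qb1_derive).
  assert (C2 : continuous (fun r => hb2 (Qb r)) x) by (apply continuous_comp; auto; apply hb2_cont).
  assert (C1 : continuous (fun r => hb1 (Qb r)) x) by (eapply der_cont; apply hb1Q_derive).
  unfold ddeta.
  apply (continuous_plus (fun r => hb2 (Qb r) * Qb1 r * Qb1 r) (fun r => hb1 (Qb r) * -2)).
  apply (continuous_mult (fun r => hb2 (Qb r) * Qb1 r) Qb1); auto.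
  apply (continuous_mult (fun r => hb2 (Qb r)) Qb1); auto.
  apply (continuous_mult (fun r => hb1 (Qb r)) (fun _ => -2)); auto.
  apply continuous_const.
Qed.
End Bump.

Lemma RInt_plusR (f g : R -> R) a b : ex_RInt f a b -> ex_RInt g a b ->
  RInt (fun x => f x + g x) a b = RInt f a b + RInt g a b.
Proof. intros; exact (RInt_plus f g a b H H0). Qed.
Lemma RInt_minusR (f g : R -> R) a b : ex_RInt f a b -> ex_RInt g a b ->
  RInt (fun x => f x - g x) a b = RInt f a b - RInt g a b.
Proof. intros; exact (RInt_minus f g a b H H0). Qed.
Lemma RInt_scalR (f : R -> R) a b k : ex_RInt f a b ->
  RInt (fun x => k * f x) a b = k * RInt f a b.
Proof. intros; exact (RInt_scal f a b k H). Qed.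

Lemma RInt_extR (f g : R -> R) a b : (forall x, Rmin a b < x < Rmax a b -> f x = g x) ->
  RInt f a b = RInt g a b.
Proof. apply RInt_ext. Qed.

Section Conv.
Variables t1 t2 : R.
Hypothesis Hle : t1 <= t2.

Definition cc (f : R -> R) := forall x, continuous (fun y => f (clamp t1 t2 y)) x.

Lemma cc_of_cont f : cont_on f t1 t2 -> cc f.
Proof. intros H x. apply cont_ccont; auto. Qed.

Lemma cc_of_global f : (forall x, continuous f x) -> cc f.
Proof. intros H. apply cc_of_cont, cont_from_continuous; auto. Qed.

Lemma cc_mult f g : cc f -> cc g -> cc (fun s => f s * g s).
Proof. intros Hf Hg x. exact (continuous_mult _ _ x (Hf x) (Hg x)). Qed.
Lemma cc_plus f g : cc f -> cc g -> cc (fun s => f s + g s).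
Proof. intros Hf Hg x. exact (continuous_plus _ _ x (Hf x) (Hg x)). Qed.
Lemma cc_const c : cc (fun _ => c).
Proof. intros x. apply continuous_const. Qed.
Lemma cc_minus f g : cc f -> cc g -> cc (fun s => f s - g s).
Proof.
  intros Hf Hg. assert (H : cc (fun s => f s + (-1) * g s)).
  apply cc_plus; auto. apply cc_mult; auto. apply cc_const.
  intros x. eapply continuous_ext; [|apply H]. intros; simpl; ring.
Qed.
Lemma cc_scal k f : cc f -> cc (fun s => k * f s).
Proof. intros. apply cc_mult; auto. apply cc_const. Qed.

Lemma clamp_tau y : t1 + t2 - clamp t1 t2 y = clamp t1 t2 (t1 + t2 - y).
Proof. unfold clamp, Rmax, Rmin; repeat destruct Rle_dec; lra. Qed.

Lemma cc_tau f : cc f -> cc (fun s => f (t1 + t2 - s)).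
Proof.
  intros Hf x.
  apply continuous_ext with (fun y => f (clamp t1 t2 (t1 + t2 - y))).
  intros y. rewrite clamp_tau. auto.
  apply (continuous_comp (fun y => t1 + t2 - y) (fun z => f (clamp t1 t2 z))).
  eapply der_cont. auto_derive; auto.
  apply Hf.
Qed.

Lemma cc_ex f : cc f -> ex_RInt f t1 t2.
Proof.
  intros H. apply ex_RInt_ext with (fun y => f (clamp t1 t2 y)).
  intros x Hx. rewrite Rmin_left, Rmax_right in Hx by auto. rewrite clamp_id; auto; lra.
  apply (ex_RInt_continuous (V:=R_CompleteNormedModule)). intros; apply H.
Qed.

Lemma cc_ex_conv g h : cc g -> cc h -> ex_RInt (fun s => g s * h (t1 + t2 - s)) t1 t2.
Proof. intros. apply cc_ex, cc_mult; auto. apply cc_tau; auto. Qed.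

Lemma cc_conv_int g h : cc g -> cc h -> cc (fun s => g s * h (t1 + t2 - s)).
Proof. intros. apply cc_mult; auto. apply cc_tau; auto. Qed.

Ltac exr := apply cc_ex; repeat first [apply cc_plus | apply cc_scal | apply cc_conv_int; assumption].

Lemma conv_sym g h : cc g -> cc h -> conv g h t1 t2 = conv h g t1 t2.
Proof.
  intros Hg Hh. unfold conv.
  set (F := fun s => h s * g (t1 + t2 - s)).
  assert (HF : ex_RInt F t1 t2) by (apply cc_ex_conv; auto).
  assert (HF' : ex_RInt F ((-1) * t1 + (t1 + t2)) ((-1) * t2 + (t1 + t2))).
  { replace ((-1) * t1 + (t1 + t2)) with t2 by ring. replace ((-1) * t2 + (t1 + t2)) with t1 by ring.
    apply ex_RInt_swap; auto. }
  pose proof (RInt_comp_lin F (-1) (t1 + t2) t1 t2 HF') as E.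
  replace ((-1) * t1 + (t1 + t2)) with t2 in E by ring. replace ((-1) * t2 + (t1 + t2)) with t1 in E by ring.
  rewrite <- (opp_RInt_swap F t1 t2 HF) in E.
  assert (E2 : RInt (fun y => scal (-1) (F (-1 * y + (t1 + t2)))) t1 t2
     = (-1) * RInt (fun s => g s * h (t1 + t2 - s)) t1 t2).
  { rewrite <- RInt_scalR by (apply cc_ex_conv; auto).
    apply RInt_ext. intros x _. unfold F, scal; simpl; unfold mult; simpl.
    replace (t1 + t2 - (-1 * x + (t1 + t2))) with x by ring.
    replace (-1 * x + (t1 + t2)) with (t1 + t2 - x) by ring. ring. }
  pose proof (eq_trans (eq_sym E2) E) as E3. unfold opp in E3; simpl in E3. lra.
Qed.

Lemma conv_expand p1 q1 p2 q2 e : cc p1 -> cc q1 -> cc p2 -> cc q2 ->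
  conv (fun s => p1 s + e * q1 s) (fun s => p2 s + e * q2 s) t1 t2 =
  conv p1 p2 t1 t2 + e * (conv p1 q2 t1 t2 + conv q1 p2 t1 t2) + e ^ 2 * conv q1 q2 t1 t2.
Proof.
  intros H1 H2 H3 H4. unfold conv.
  rewrite (RInt_extR _ (fun s => p1 s * p2 (t1 + t2 - s) +
     (e * (p1 s * q2 (t1 + t2 - s) + q1 s * p2 (t1 + t2 - s)) + e ^ 2 * (q1 s * q2 (t1 + t2 - s)))) t1 t2) by (intros; ring).
  rewrite RInt_plusR, RInt_plusR, RInt_scalR, RInt_scalR, RInt_plusR; try ring;
  exr.
Qed.

Lemma conv_expand1 p1 p2 q2 e : cc p1 -> cc p2 -> cc q2 ->
  conv p1 (fun s => p2 s + e * q2 s) t1 t2 = conv p1 p2 t1 t2 + e * conv p1 q2 t1 t2.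
Proof.
  intros H1 H3 H4. unfold conv.
  rewrite (RInt_extR _ (fun s => p1 s * p2 (t1 + t2 - s) + e * (p1 s * q2 (t1 + t2 - s))) t1 t2) by (intros; ring).
  rewrite RInt_plusR, RInt_scalR; try ring;
  exr.
Qed.
End Conv.

Lemma tau_derive t1 t2 x : is_derive (fun s => t1 + t2 - s) x (-1).
Proof. auto_derive; auto; ring. Qed.

Lemma ibp t1 t2 du ddu et det : t1 < t2 -> deriv_on du ddu t1 t2 -> cont_on ddu t1 t2 ->
  (forall x, is_derive et x (det x)) -> (forall x, continuous det x) -> et t1 = 0 ->
  conv du det t1 t2 = conv ddu et t1 t2 + du t1 * et t2.
Proof.
  intros H12 Hdu Hddu Het Hdet Het1.
  assert (Hle : t1 <= t2) by lra.
  set (Dx := ext du ddu t1 t2).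
  set (K := fun s => ddu s * et (t1 + t2 - s) - du s * det (t1 + t2 - s)).
  assert (ccet : cc t1 t2 et) by (apply cc_of_global; auto; intro; eapply der_cont; apply Het).
  assert (ccdet : cc t1 t2 det) by (apply cc_of_global; auto).
  assert (ccdu : cc t1 t2 du) by (apply cc_of_cont; auto; eapply deriv_cont; eauto).
  assert (ccddu : cc t1 t2 ddu) by (apply cc_of_cont; auto).
  assert (ccK : cc t1 t2 K) by (apply cc_minus; auto; apply cc_conv_int; auto).
  set (Phi := fun s => Dx s * et (t1 + t2 - s)).
  assert (HI : is_RInt (fun s => K (clamp t1 t2 s)) t1 t2 (minus (Phi t2) (Phi t1))).
  { apply (is_RInt_derive (V:=R_CompleteNormedModule) Phi).
    - intros x Hx. rewrite Rmin_left, Rmax_right in Hx by lra. rewrite clamp_id by lra.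
      pose proof (is_derive_mult Dx (fun s => et (t1 + t2 - s)) x (ddu x) _
         (ext_derive du ddu t1 t2 x H12 Hdu Hx)
         (is_derive_comp et (fun s => t1 + t2 - s) x _ _ (Het _) (tau_derive t1 t2 x))
         (fun a b => Rmult_comm a b)) as HD.
      replace (K x) with (plus (mult (ddu x) (et (t1 + t2 - x)))
                          (mult (Dx x) (scal (-1) (det (t1 + t2 - x))))).
      exact HD.
      unfold K, Dx. rewrite ext_eq by lra. unfold plus, mult, scal; simpl. unfold mult; simpl. ring.
    - intros x _. apply ccK. }
  apply is_RInt_ext with (g := K) in HI.
  2: { intros x Hx. rewrite Rmin_left, Rmax_right in Hx by lra. rewrite clamp_id; auto; lra. }
  apply (is_RInt_unique (V:=R_CompleteNormedModule)) in HI.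
  unfold K in HI. rewrite RInt_minusR in HI by (apply cc_ex; auto; apply cc_conv_int; auto).
  unfold Phi, Dx, minus, plus, opp in HI; simpl in HI.
  rewrite !ext_eq in HI by lra.
  replace (t1 + t2 - t2) with t1 in HI by ring. replace (t1 + t2 - t1) with t2 in HI by ring.
  rewrite Het1 in HI. unfold conv. lra.
Qed.

Theorem proposition2 (t1 t2 m k u1 v1 : R) (f u du ddu : R -> R) :
  0 <= t1 -> t1 < t2 -> 0 < m -> 0 < k ->
  cont_on f t1 t2 ->
  C2_on u du ddu t1 t2 -> u t1 = u1 ->
  (forall eta deta ddeta : R -> R,
      C2_on eta deta ddeta t1 t2 -> eta t1 = 0 ->
      is_derive (fun e => It m k v1 t1 t2 f (fun s => u s + e * eta s)
                                           (fun s => du s + e * deta s)) 0 0) ->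
  (forall s, t1 < s < t2 -> m * ddu s + k * u s = f s) /\
  u t1 = u1 /\ du t1 = v1.
Proof.
  intros Ht1 H12 Hm Hk Hf [Hdu [Hddu Hcddu]] Hu1 Hvar.
  assert (Hle : t1 <= t2) by lra.
  assert (ccu : cc t1 t2 u) by (apply cc_of_cont; auto; eapply deriv_cont; eauto).
  assert (ccdu : cc t1 t2 du) by (apply cc_of_cont; auto; eapply deriv_cont; eauto).
  assert (ccddu : cc t1 t2 ddu) by (apply cc_of_cont; auto).
  assert (ccf : cc t1 t2 f) by (apply cc_of_cont; auto).
  set (g := fun s => m * ddu s + k * u s - f s).
  assert (ccg : cc t1 t2 g).
  { apply cc_minus; auto. apply cc_plus; apply cc_scal; auto. }
  assert (KEY : forall et det ddet, (forall x, is_derive et x (det x)) ->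
     (forall x, is_derive det x (ddet x)) -> (forall x, continuous ddet x) -> et t1 = 0 ->
     conv g et t1 t2 + m * (du t1 - v1) * et t2 = 0).
  { intros et det ddet H1 H2 H3 H0.
    pose proof (Hvar et det ddet (global_C2 et det ddet t1 t2 H1 H2 H3) H0) as HD.
    assert (ccet : cc t1 t2 et) by (apply cc_of_global; auto; intro; eapply der_cont; apply H1).
    assert (ccdet : cc t1 t2 det) by (apply cc_of_global; auto; intro; eapply der_cont; apply H2).
    set (al := m / 2 * conv du du t1 t2 + k / 2 * conv u u t1 t2 - conv f u t1 t2 - m * v1 * u t2).
    set (be := m / 2 * (conv du det t1 t2 + conv det du t1 t2) + k / 2 * (conv u et t1 t2 + conv et u t1 t2)
               - conv f et t1 t2 - m * v1 * et t2).
    set (ga := m / 2 * conv det det t1 t2 + k / 2 * conv et et t1 t2).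
    assert (Epoly : forall e, al + be * e + ga * e ^ 2 =
        It m k v1 t1 t2 f (fun s => u s + e * et s) (fun s => du s + e * det s)).
    { intros e. unfold It. rewrite !conv_expand, conv_expand1; auto. unfold al, be, ga. ring. }
    assert (HP : is_derive (fun e => al + be * e + ga * e ^ 2) 0 be) by (auto_derive; auto; ring).
    apply (is_derive_ext _ _ _ _ Epoly) in HP.
    apply is_derive_unique in HP. apply is_derive_unique in HD.
    assert (Hbe : be = 0) by (rewrite <- HP; apply HD). clear HP HD. unfold be in Hbe.
    rewrite (conv_sym t1 t2 Hle det du), (conv_sym t1 t2 Hle et u) in Hbe by auto.
    rewrite (ibp t1 t2 du ddu et det) in Hbe; auto.
    2: { intro; eapply der_cont; apply H2. }
    assert (Eg : conv g et t1 t2 = m * conv ddu et t1 t2 + k * conv u et t1 t2 - conv f et t1 t2).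
    { unfold conv, g.
      rewrite (RInt_extR _ (fun s => m * (ddu s * et (t1 + t2 - s)) + k * (u s * et (t1 + t2 - s))
                - f s * et (t1 + t2 - s)) t1 t2) by (intros; ring).
      rewrite RInt_minusR, RInt_plusR, !RInt_scalR; auto; apply cc_ex; auto;
      repeat first [apply cc_plus | apply cc_scal | apply cc_conv_int; assumption]. }
    rewrite Eg. lra. }
  assert (Ha : forall s0, t1 < s0 < t2 -> g s0 = 0).
  { intros s0 Hs0. destruct (Req_dec (g s0) 0) as [|Hne]; auto. exfalso.
    set (c := g s0) in *.
    assert (Hc : 0 < Rabs c / 2) by (pose proof (Rabs_pos_lt c Hne); lra).
    pose proof (ccg s0) as Hcg. apply continuity_pt_filterlim in Hcg.
    destruct (Hcg _ Hc) as [del [Hdel Hy]].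
    assert (Hnear : forall x, Rabs (x - s0) < del -> t1 <= x <= t2 -> 0 < c * g x).
    { intros x Hx Hxr. destruct (Req_dec x s0) as [->|Hxs].
      - fold c. nra.
      - assert (Hd : Rabs (g x - c) < Rabs c / 2).
        { pose proof (Hy x) as Hyx. simpl in Hyx. unfold R_dist in Hyx.
          rewrite (clamp_id t1 t2 x Hxr), (clamp_id t1 t2 s0) in Hyx by lra.
          apply Hyx. split; auto. split. exact I. auto. }
        apply Rabs_def2 in Hd. unfold Rabs in Hd; destruct (Rcase_abs c); nra. }
    set (r := Rmin del (Rmin (s0 - t1) (t2 - s0)) / 2).
    assert (Hr1 : 0 < r). { unfold r. assert (0 < Rmin del (Rmin (s0 - t1) (t2 - s0))).
      apply Rmin_pos; auto. apply Rmin_pos; lra. lra. }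
    assert (Hr2 : r < del). { unfold r. pose proof (Rmin_l del (Rmin (s0 - t1) (t2 - s0))). lra. }
    assert (Hr3 : r < s0 - t1). { unfold r. pose proof (Rmin_r del (Rmin (s0 - t1) (t2 - s0))).
      pose proof (Rmin_l (s0 - t1) (t2 - s0)). lra. }
    assert (Hr4 : r < t2 - s0). { unfold r. pose proof (Rmin_r del (Rmin (s0 - t1) (t2 - s0))).
      pose proof (Rmin_r (s0 - t1) (t2 - s0)). lra. }
    set (a := s0 - r). set (b := s0 + r).
    pose proof (KEY (eta t1 t2 a b) (deta t1 t2 a b) (ddeta t1 t2 a b)
      (eta_derive t1 t2 a b) (deta_derive t1 t2 a b) (ddeta_cont t1 t2 a b)) as HK.
    assert (E1 : eta t1 t2 a b t1 = 0).
    { unfold eta, hb, Qb. rewrite Rmax_left. ring. unfold a, b. nra. }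
    assert (E2 : eta t1 t2 a b t2 = 0).
    { unfold eta, hb, Qb. rewrite Rmax_left. ring. unfold a, b. nra. }
    specialize (HK E1). rewrite E2 in HK.
    set (psi := fun s => hb ((s - a) * (b - s))).
    assert (Hcp : conv g (eta t1 t2 a b) t1 t2 = RInt (fun s => g s * psi s) t1 t2).
    { unfold conv. apply RInt_extR. intros x _. unfold eta, psi, Qb.
      replace (t1 + t2 - (t1 + t2 - x) - a) with (x - a) by ring.
      replace (b - (t1 + t2 - (t1 + t2 - x))) with (b - x) by ring. auto. }
    set (I := fun s => c * (g s * psi s)).
    assert (ccpsi : cc t1 t2 psi).
    { apply cc_of_global; auto. intros x. unfold psi.
      apply (continuous_comp (fun s => (s - a) * (b - s)) hb).
      eapply der_cont. auto_derive; auto.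
      eapply der_cont. apply hb_derive. }
    assert (ccI : cc t1 t2 I) by (apply cc_scal, cc_mult; auto).
    assert (HI0 : RInt I t1 t2 = 0).
    { unfold I. rewrite RInt_scalR. rewrite <- Hcp. rewrite Rmult_0_r in HK. rewrite Rplus_0_r in HK. rewrite HK. apply Rmult_0_r. apply cc_ex; auto. apply cc_mult; auto. }
    assert (Hpos : forall x, t1 <= x <= t2 -> 0 <= I x).
    { intros x Hx. unfold I, psi, hb.
      destruct (Rle_lt_dec ((x - a) * (b - x)) 0) as [Hn|Hp].
      - rewrite Rmax_left by auto. nra.
      - rewrite Rmax_right by lra.
        assert (a < x < b) by (unfold a, b in *; nra).
        assert (0 < c * g x). { apply Hnear; auto. apply Rabs_def1; unfold a, b in *; lra. }
        assert (0 <= ((x - a) * (b - x)) ^ 3) by (apply pow_le; lra). nra. }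
    assert (Hpos2 : forall x, a < x < b -> 0 < I (clamp t1 t2 x)).
    { intros x Hx. rewrite clamp_id by (unfold a, b in *; lra). unfold I, psi, hb.
      assert (Hp : 0 < (x - a) * (b - x)) by nra.
      rewrite Rmax_right by lra.
      assert (0 < c * g x). { apply Hnear. apply Rabs_def1; unfold a, b in *; lra. unfold a, b in *; lra. }
      assert (0 < ((x - a) * (b - x)) ^ 3) by (apply pow_lt; lra). nra. }
    assert (Hab : a < b) by (unfold a, b; lra).
    assert (Ht1a : t1 <= a) by (unfold a; lra).
    assert (Hbt2 : b <= t2) by (unfold b; lra).
    assert (exI : ex_RInt I t1 t2) by (apply cc_ex; auto).
    assert (ex1 : ex_RInt I t1 a) by (apply (ex_RInt_Chasles_1 I t1 a t2); auto; lra).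
    assert (ex2 : ex_RInt I a t2) by (apply (ex_RInt_Chasles_2 I t1 a t2); auto; lra).
    assert (ex3 : ex_RInt I a b) by (apply (ex_RInt_Chasles_1 I a b t2); auto; lra).
    assert (ex4 : ex_RInt I b t2) by (apply (ex_RInt_Chasles_2 I a b t2); auto; lra).
    pose proof (RInt_Chasles I t1 a t2 ex1 ex2) as C1.
    pose proof (RInt_Chasles I a b t2 ex3 ex4) as C2.
    unfold plus in C1, C2; simpl in C1, C2.
    assert (P1 : 0 <= RInt I t1 a) by (apply RInt_ge_0; auto; intros; apply Hpos; lra).
    assert (P2 : 0 <= RInt I b t2) by (apply RInt_ge_0; auto; intros; apply Hpos; lra).
    assert (P3 : 0 < RInt (fun x => I (clamp t1 t2 x)) a b).
    { apply RInt_gt_0; auto; intros; apply ccI. }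
    assert (P4 : RInt (fun x => I (clamp t1 t2 x)) a b = RInt I a b).
    { apply RInt_extR. intros x Hx. rewrite Rmin_left, Rmax_right in Hx by lra.
      rewrite clamp_id; auto; lra. }
    lra. }
  split; [|split]; auto.
  - intros s Hs. pose proof (Ha s Hs). unfold g in *. lra.
  - pose proof (KEY (fun r => r - t1) (fun _ => 1) (fun _ => 0)) as HK.
    assert (HK' : conv g (fun r => r - t1) t1 t2 + m * (du t1 - v1) * (t2 - t1) = 0).
    { apply HK.
      - intros; auto_derive; auto; try ring.
      - intros; auto_derive; auto; try ring.
      - intros; apply continuous_const.
      - simpl; ring. }
    assert (Hz : conv g (fun r => r - t1) t1 t2 = 0).
    { unfold conv. rewrite (RInt_extR _ (fun _ => 0)).
      rewrite RInt_const. unfold scal; simpl; unfold mult; simpl. ring.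
      intros x Hx. rewrite Rmin_left, Rmax_right in Hx by lra. rewrite Ha; auto. ring. }
    rewrite Hz in HK'.
    assert (Hmt : 0 < m * (t2 - t1)) by (apply Rmult_lt_0_compat; lra).
    assert (Hx : (du t1 - v1) * (m * (t2 - t1)) = 0) by lra.
    apply Rmult_integral in Hx. destruct Hx; lra.
Qed.
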